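(* Assume that at each bus either there is no generator or there are at least two generators, i.e., $n_i=0$ or $n_i\ge 2$ for every $i\in\{1,\dots,N_b\}$. Then the inelastic electricity market game has an efficient Nash equilibrium.
   Context: Network: a directed graph $\mathcal G=(\mathcal V,\mathcal E)$ with buses $\mathcal V=\{1,\dots,N_b\}$ and power lines $\mathcal E$; $\mathcal N_i^+=\{j:(i,j)\in\mathcal E\}$, $\mathcal N_i^-=\{j:(j,i)\in\mathcal E\}$. Each line $(i,j)$ carries flow $z_{ij}\in\mathbb R$ with limit $\bar z_{ij}>0$. There are $N$ generators labelled $1,\dots,N$; $G_i$ is the (possibly empty) set of generators at bus $i$, the $G_i$ partition $\{1,\dots,N\}$, and $n_i=|G_i|$. Bus $i$ has load $y_i\ge0$. Generator $n$ has cost $f_n(x)=a_nx^2+c_nx$ with $a_n>0$, $c_n\ge 0$. DC-OPF: minimize $\sum_{n=1}^N f_n(x_n)$ over $(x,z)$ subject to $\sum_{j\in\mathcal N_i^+}z_{ij}-\sum_{j\in\mathcal N_i^-}z_{ji}=\sum_{n\in G_i}x_n-y_i$ for all buses $i$ (the sum over $G_i$ being $0$ if $G_i=\emptyset$), $-\bar z_{ij}\le z_{ij}\le\bar z_{ij}$ for all $(i,j)\in\mathcal E$, and $x\ge 0$. This problem is assumed feasible; $(x^*,z^* )$ denotes an optimizer, and $x^*$ is unique. S-DC-OPF given bids $b\in\mathbb R^N_{\ge0}$: same constraints, objective $\sum_{n=1}^N b_nx_n$. Inelastic electricity market game: players are generators $n$, actions are bids $b_n\ge 0$, and given bids $b$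 and an optimizer $(x^{\rm opt}(b),z^{\rm opt}(b))$ of S-DC-OPF chosen by the operator, player $n$'s payoff is $u_n(b_n,x^{\rm opt}_n(b))=b_nx^{\rm opt}_n(b)-f_n(x^{\rm opt}_n(b))$. Nash equilibrium: a bid profile $b^*\ge0$ for which there exists an optimizer $(x^{\rm opt}(b^* ),z^{\rm opt}(b^* ))$ of S-DC-OPF with bids $b^*$ such that for all $n$, all $b_n\ge0$, and all optimizers $x^{\rm opt}(b_n,b^*_{-n})$ of S-DC-OPF with bids $(b_n,b^*_{-n})$, $u_n(b_n,x^{\rm opt}_n(b_n,b^*_{-n}))\le u_n(b_n^*,x^{\rm opt}_n(b^* ))$. Efficient bid: $b^*\ge0$ such that $(x^*,z^* )$ is an optimizer of S-DC-OPF with bids $b^*$ and $x^*_n=\arg\max_{x\ge0}(b^*_nx-f_n(x))$ for all $n$. An efficient Nash equilibrium is an efficient bid that is a Nash equilibrium. *)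

(* Defs.v *)
(* the statement is purely algebraic/order-theoretic, so it is
   stated over an arbitrary real field R (this includes the real numbers). *)
From HB Require Import structures.
From mathcomp Require Import all_boot all_order all_algebra.
Set Implicit Arguments. Unset Strict Implicit. Unset Printing Implicit Defensive.
Import Order.TTheory GRing.Theory Num.Theory.
Local Open Scope ring_scope.

Section Market.
Variable R : realFieldType.
Variables Nb N : nat.
Variable E : {set 'I_Nb * 'I_Nb}.
Variable zbar : 'I_Nb * 'I_Nb -> R.
(* loc n = the bus at which generator n sits; G_i = loc^-1(i) partitions gens *)
Variable loc : 'I_N -> 'I_Nb.
Variable y : 'I_Nb -> R.

Definition gens_at (i : 'I_Nb) : {set 'I_N} := [set n | loc n == i].

(* feasible set of DC-OPF / S-DC-OPF (x = generation, z = line flows) *)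
Definition feasible (x : 'I_N -> R) (z : 'I_Nb * 'I_Nb -> R) : Prop :=
  (forall i : 'I_Nb,
      \sum_(j : 'I_Nb | (i, j) \in E) z (i, j)
      - \sum_(j : 'I_Nb | (j, i) \in E) z (j, i)
      = \sum_(n in gens_at i) x n - y i)
  /\ (forall e, e \in E -> - zbar e <= z e <= zbar e)
  /\ (forall n, 0 <= x n).

Definition gcost (a c : 'I_N -> R) (n : 'I_N) (x : R) : R :=
  a n * x ^+ 2 + c n * x.

Definition DCOPF_opt (a c : 'I_N -> R) x z : Prop :=
  feasible x z /\
  forall x' z', feasible x' z' ->
    \sum_n gcost a c n (x n) <= \sum_n gcost a c n (x' n).

Definition SDCOPF_opt (b : 'I_N -> R) x z : Prop :=
  feasible x z /\
  forall x' z', feasible x' z' ->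
    \sum_n b n * x n <= \sum_n b n * x' n.

Definition payoff (a c : 'I_N -> R) (n : 'I_N) (bn xn : R) : R :=
  bn * xn - gcost a c n xn.

Definition upd_bid (b : 'I_N -> R) (n : 'I_N) (bn : R) : 'I_N -> R :=
  fun m => if m == n then bn else b m.

Definition nonneg_bids (b : 'I_N -> R) : Prop := forall n, 0 <= b n.

Definition is_NE (a c : 'I_N -> R) (b : 'I_N -> R) : Prop :=
  nonneg_bids b /\
  exists xo zo, SDCOPF_opt b xo zo /\
    forall n (bn : R), 0 <= bn ->
      forall x' z', SDCOPF_opt (upd_bid b n bn) x' z' ->
        payoff a c n bn (x' n) <= payoff a c n (b n) (xo n).

Definition is_argmax_nonneg (g : R -> R) (x0 : R) : Prop :=
  0 <= x0 /\ forall x, 0 <= x -> x != x0 -> g x < g x0.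

Definition efficient_bid (a c : 'I_N -> R) xs zs (b : 'I_N -> R) : Prop :=
  nonneg_bids b /\ SDCOPF_opt b xs zs /\
  forall n, is_argmax_nonneg (fun x => b n * x - gcost a c n x) (xs n).

Definition efficient_NE (a c : 'I_N -> R) xs zs (b : 'I_N -> R) : Prop :=
  efficient_bid a c xs zs b /\ is_NE a c b.

End Market.

(* Main.v *)
Require Import Defs.
From HB Require Import structures.
From mathcomp Require Import all_boot all_order all_algebra.
From mathcomp Require Import ring lra.
Import Order.TTheory GRing.Theory Num.Theory.
Set Implicit Arguments. Unset Strict Implicit.
Local Open Scope ring_scope.

Lemma pos_lin (R : realFieldType) (G S : R) : 0 <= S ->
  (forall t, 0 < t -> t <= 1 -> 0 <= t * G + t ^+ 2 * S) -> 0 <= G.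
Proof.
move=> hS h; rewrite leNgt; apply/negP => hG.
have hu : 0 < 2 * (S - G) by lra.
set t := - G / (2 * (S - G)).
have ht2 : t * (2 * (S - G)) = - G by rewrite /t divfK // gt_eqF.
have ht0 : 0 < t by rewrite /t divr_gt0 // oppr_gt0.
have ht1 : t <= 1 by nra.
have := h t ht0 ht1.
have e : t ^+ 2 * S = t * (t * S) by rewrite expr2; ring.
rewrite e; nra.
Qed.

Lemma lincomb (R : realFieldType) (t A1 B1 C1 A2 B2 C2 Y : R) :
  A1 - B1 = C1 - Y -> A2 - B2 = C2 - Y ->
  (1 - t) * A1 + t * A2 - ((1 - t) * B1 + t * B2) = (1 - t) * C1 + t * C2 - Y.
Proof.
move=> h1 h2.
have -> : (1 - t) * A1 + t * A2 - ((1 - t) * B1 + t * B2)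
   = (1 - t) * (A1 - B1) + t * (A2 - B2) by ring.
rewrite h1 h2; ring.
Qed.

Definition cc (R : realFieldType) (T : Type) (t : R) (f1 f2 : T -> R) :=
  fun k => (1 - t) * f1 k + t * f2 k.

Lemma cc_feas (R : realFieldType) (Nb N : nat)
  (E : {set 'I_Nb * 'I_Nb}) (zbar : 'I_Nb * 'I_Nb -> R)
  (loc : 'I_N -> 'I_Nb) (y : 'I_Nb -> R) x1 z1 x2 z2 (t : R) :
  feasible E zbar loc y x1 z1 -> feasible E zbar loc y x2 z2 ->
  0 <= t -> t <= 1 -> feasible E zbar loc y (cc t x1 x2) (cc t z1 z2).
Proof.
move=> [b1 [l1 n1]] [b2 [l2 n2]] t0 t1; split; [|split].
- move=> i; rewrite /cc !big_split /= -!mulr_sumr; apply: lincomb; [exact: b1 | exact: b2].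
- move=> e he; have /andP[l1a l1b] := l1 e he; have /andP[l2a l2b] := l2 e he.
  rewrite /cc; apply/andP; split; nra.
- move=> n; rewrite /cc; apply: addr_ge0; apply: mulr_ge0 => //; lra.
Qed.

Definition mc (R : realFieldType) (N : nat) (a c xs : 'I_N -> R) n :=
  2 * a n * xs n + c n.

Lemma foc (R : realFieldType) (Nb N : nat)
  (E : {set 'I_Nb * 'I_Nb}) (zbar : 'I_Nb * 'I_Nb -> R)
  (loc : 'I_N -> 'I_Nb) (y : 'I_Nb -> R) (a c : 'I_N -> R)
  (ha : forall n, 0 < a n) xs zs
  (hopt : DCOPF_opt E zbar loc y a c xs zs) x z :
  feasible E zbar loc y x z ->
  \sum_n mc a c xs n * xs n <= \sum_n mc a c xs n * x n.
Proof.
move=> hf.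
set G := \sum_n mc a c xs n * (x n - xs n).
set S := \sum_n a n * (x n - xs n) ^+ 2.
have hS : 0 <= S.
  by apply: sumr_ge0 => n _; apply: mulr_ge0; [exact: ltW | exact: sqr_ge0].
have key : forall t, 0 < t -> t <= 1 -> 0 <= t * G + t ^+ 2 * S.
  move=> t t0 t1.
  have hf' := cc_feas hopt.1 hf (ltW t0) t1.
  have := hopt.2 _ _ hf'.
  have -> : \sum_n gcost a c n (cc t xs x n)
     = \sum_n gcost a c n (xs n) + (t * G + t ^+ 2 * S).
    rewrite /G /S !mulr_sumr -!big_split /=; apply: eq_bigr => n _.
    rewrite /gcost /cc /mc; ring.
  by rewrite lerDl.
have := pos_lin hS key.
rewrite /G => hG; rewrite -subr_ge0 -sumrB.
by under eq_bigr => n _ do rewrite -mulrBr.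
Qed.

Lemma sum_ind_in (R : realFieldType) (N : nat) (A : {set 'I_N}) (m : 'I_N) (d : R) :
  \sum_(k in A) (if k == m then d else 0) = if m \in A then d else 0.
Proof.
rewrite -big_mkcondr; case: (boolP (m \in A)) => hm.
- apply: (big_pred1 m) => k /=; case: (eqVneq k m) => [->|]; rewrite ?hm ?andbF //.
- apply: big_pred0 => k; case: (eqVneq k m) => [->|]; rewrite ?andbF //.
  by rewrite (negbTE hm).
Qed.

Lemma feas_bus (R : realFieldType) (Nb N : nat)
  (E : {set 'I_Nb * 'I_Nb}) (zbar : 'I_Nb * 'I_Nb -> R)
  (loc : 'I_N -> 'I_Nb) (y : 'I_Nb -> R) x x' z :
  feasible E zbar loc y x z -> (forall n, 0 <= x' n) ->
  (forall i, \sum_(n in gens_at loc i) x' n = \sum_(n in gens_at loc i) x n) ->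
  feasible E zbar loc y x' z.
Proof.
move=> [h1 [h2 h3]] h0 hs; split; [|split] => //.
by move=> i; rewrite hs h1.
Qed.

Definition shift (R : realFieldType) (N : nat) (x : 'I_N -> R) (n m : 'I_N) :=
  fun k => x k + (if k == m then x n else 0) - (if k == n then x n else 0).

Lemma shift_feas (R : realFieldType) (Nb N : nat)
  (E : {set 'I_Nb * 'I_Nb}) (zbar : 'I_Nb * 'I_Nb -> R)
  (loc : 'I_N -> 'I_Nb) (y : 'I_Nb -> R) x z n m :
  feasible E zbar loc y x z -> n != m -> loc n = loc m ->
  feasible E zbar loc y (shift x n m) z.
Proof.
move=> hf nm lnm; apply: (feas_bus hf).
- move=> k; have x0 := hf.2.2; rewrite /shift.
  case: (eqVneq k n) => [->|kn]; first by rewrite (negbTE nm); lra.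
  case: (eqVneq k m) => [->|km]; last by rewrite subr0 addr0.
  by rewrite subr0; apply: addr_ge0.
- move=> i; rewrite /shift big_split /= big_split /= sumrN !sum_ind_in.
  rewrite !inE lnm; case: (loc m == i); ring.
Qed.

Lemma shift_sum (R : realFieldType) (N : nat) (x w : 'I_N -> R) n m :
  \sum_k w k * shift x n m k = \sum_k w k * x k + x n * w m - x n * w n.
Proof.
rewrite /shift.
have -> : \sum_k w k * (x k + (if k == m then x n else 0) - (if k == n then x n else 0))
  = \sum_k (w k * x k + (if k == m then w m * x n else 0)
    - (if k == n then w n * x n else 0)).
  apply: eq_bigr => k _.
  case: (eqVneq k m) => [->|km]; case: (eqVneq _ n) => [->|kn];
    rewrite ?eqxx ?(negbTE km) ?(negbTE kn); ring.
rewrite big_split /= big_split /= sumrN -!big_mkcond /= !big_pred1_eq; ring.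
Qed.

Definition pbus (R : realFieldType) (Nb N : nat) (loc : 'I_N -> 'I_Nb) (g : 'I_N -> R) i :=
  [pick k | (loc k == i) && [forall j, (loc j == i) ==> (g k <= g j)]].

Definition price (R : realFieldType) (Nb N : nat) (loc : 'I_N -> 'I_Nb) (g : 'I_N -> R) i :=
  if pbus loc g i is Some k then g k else 0.

Lemma pbus_some (R : realFieldType) (Nb N : nat) (loc : 'I_N -> 'I_Nb) (g : 'I_N -> R) i k :
  pbus loc g i = Some k -> loc k = i /\ forall j, loc j = i -> g k <= g j.
Proof.
rewrite /pbus; case: pickP => // k' /andP[/eqP lk /forallP hk] [<-]; split => // j lj.
by have /implyP := hk j; apply; rewrite lj.
Qed.

Lemma pbus_ex (R : realFieldType) (Nb N : nat) (loc : 'I_N -> 'I_Nb) (g : 'I_N -> R) n :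
  exists k, pbus loc g (loc n) = Some k.
Proof.
have [k Pk hk] := @arg_minP _ R _ n (fun k => loc k == loc n) g (eqxx _).
rewrite /pbus; case: pickP => [k' _|none]; first by exists k'.
exfalso; have := none k; rewrite Pk /=; move/negP; apply.
by apply/forallP => j; apply/implyP => hj; exact: hk.
Qed.

Theorem proposition3p1 (R : realFieldType) (Nb N : nat)
  (E : {set 'I_Nb * 'I_Nb}) (zbar : 'I_Nb * 'I_Nb -> R)
  (loc : 'I_N -> 'I_Nb) (y : 'I_Nb -> R) (a c : 'I_N -> R)
  (hzbar : forall e, e \in E -> 0 < zbar e)
  (hy : forall i, 0 <= y i)
  (ha : forall n, 0 < a n)
  (hc : forall n, 0 <= c n)
  (hfeas : exists x z, feasible E zbar loc y x z)
  (xs : 'I_N -> R) (zs : 'I_Nb * 'I_Nb -> R)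
  (hopt : DCOPF_opt E zbar loc y a c xs zs)
  (huniq : forall x z, DCOPF_opt E zbar loc y a c x z -> forall n, x n = xs n)
  (hbus : forall i : 'I_Nb,
      #|gens_at loc i| = 0%N \/ (2 <= #|gens_at loc i|)%N) :
  exists b : 'I_N -> R, efficient_NE E zbar loc y a c xs zs b.
Proof.
set g := mc a c xs.
set b := fun n => price loc g (loc n).
have xs0 : forall n, 0 <= xs n := hopt.1.2.2.
have g0 : forall n, 0 <= g n.
  move=> n; rewrite /g /mc; apply: addr_ge0 => //; apply: mulr_ge0 => //.
  by apply: mulr_ge0 => //; exact: ltW.
have hbk : forall n, exists k, b n = g k /\ loc k = loc n /\
    forall j, loc j = loc n -> g k <= g j.
  move=> n; have [k pk] := pbus_ex loc g n; have [lk hk] := pbus_some pk.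
  by exists k; rewrite /b /price pk.
have hb0 : forall n, 0 <= b n by move=> n; have [k [-> _]] := hbk n.
have hble : forall n j, loc j = loc n -> b n <= g j.
  by move=> n j lj; have [k [-> [_ hk]]] := hbk n; exact: hk.
have hbpos : forall n, 0 < xs n -> b n = g n.
  move=> n xpos; have [k [bk [lk hk]]] := hbk n; rewrite bk.
  apply/eqP; rewrite eq_le hk //=.
  case: (eqVneq n k) => [->//|nk].
  have := foc ha hopt (shift_feas hopt.1 nk (esym lk)).
  rewrite shift_sum -/g; nra.
have hbxs : forall n, b n * xs n = g n * xs n.
  move=> n; have := xs0 n; rewrite le_eqVlt => /orP[/eqP <-|xp]; first by rewrite !mulr0.
  by rewrite hbpos.
have hK : forall n x, 0 <= x -> (b n - g n) * (x - xs n) <= 0.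
  move=> n x x0; have := xs0 n; rewrite le_eqVlt => /orP[/eqP <-|xp].
    by rewrite subr0; apply: mulr_le0_ge0 => //; rewrite subr_le0; apply: hble.
  by rewrite hbpos // subrr mul0r.
have hcore : forall n x, b n * x - gcost a c n x = b n * xs n - gcost a c n (xs n)
    + ((b n - g n) * (x - xs n) - a n * (x - xs n) ^+ 2).
  by move=> n x; rewrite /gcost /g /mc; ring.
have hsd : SDCOPF_opt E zbar loc y b xs zs.
  split; first exact: hopt.1.
  move=> x' z' hf.
  set X := fun i => \sum_(j in gens_at loc i) x' j.
  set xt := fun n => if pbus loc g (loc n) == Some n then X (loc n) else 0.
  have hft : feasible E zbar loc y xt z'.
    apply: (feas_bus hf).
      move=> n; rewrite /xt; case: ifP => // _; apply: sumr_ge0 => j _; exact: hf.2.2.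
    move=> i; rewrite /xt.
    case pi: (pbus loc g i) => [k|].
      have [lk _] := pbus_some pi.
      rewrite (eq_bigr (fun n => if n == k then X i else 0)); last first.
        move=> n; rewrite inE => /eqP ->; rewrite pi.
        by have -> : (Some k == Some n) = (n == k) by apply/eqP/eqP => [[->]|->].
      by rewrite sum_ind_in inE lk eqxx.
    apply: eq_bigr => n; rewrite inE => /eqP ln; exfalso.
    have [k pk] := pbus_ex loc g n; by rewrite ln pi in pk.
  have := foc ha hopt hft.
  have -> : \sum_n g n * xt n = \sum_n b n * x' n.
    rewrite (partition_big loc xpredT) // [RHS](partition_big loc xpredT) //.
    apply: eq_bigr => i _.
    rewrite [RHS](eq_bigr (fun n => price loc g i * x' n)); last first.
      by move=> n /= /eqP ln; rewrite /b ln.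
    rewrite -mulr_sumr /price.
    have eX : \sum_(n | true && (loc n == i)) x' n = X i.
      by apply: eq_bigl => n; rewrite inE.
    rewrite eX /xt.
    case pi: (pbus loc g i) => [k|].
      have [lk _] := pbus_some pi.
      rewrite (eq_bigr (fun n => if n == k then g k * X i else 0)); last first.
        move=> n /= /eqP ln; rewrite ln pi.
        have -> : (Some k == Some n) = (n == k) by apply/eqP/eqP => [[->]|->].
        by case: (eqVneq n k) => [->|]; rewrite ?mulr0.
      rewrite -big_mkcondr; apply: (big_pred1 k) => n /=.
      by case: (eqVneq n k) => [->|]; rewrite ?lk ?eqxx ?andbF.
    rewrite mul0r big1 // => n /= /eqP ->; by rewrite pi mulr0.
  have -> : \sum_n g n * xs n = \sum_n b n * xs n by apply: eq_bigr => n _; rewrite hbxs.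
  by [].
exists b; split; [split; [exact: hb0 | split; [exact: hsd|]] | split; [exact: hb0|]].
  move=> n; split; first exact: xs0.
  move=> x x0 hne; rewrite hcore.
  have := hK n x x0.
  have : 0 < a n * (x - xs n) ^+ 2.
    by apply: mulr_gt0 => //; rewrite exprn_even_gt0 //= subr_eq0.
  lra.
exists xs, zs; split; first exact: hsd.
move=> n bn hbn x' z' [hf' hopt'].
rewrite /payoff.
have hx' := hf'.2.2 n.
have hpay : forall x, 0 <= x -> b n * x - gcost a c n x <= b n * xs n - gcost a c n (xs n).
  move=> x x0; rewrite hcore; have := hK n x x0.
  have : 0 <= a n * (x - xs n) ^+ 2 by apply: mulr_ge0; [exact: ltW | exact: sqr_ge0].
  lra.
move: hx'; rewrite le_eqVlt => /orP[/eqP <-|xp].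
  have := hpay 0 (lexx 0); rewrite /gcost; rewrite ?mulr0 ?mul0r ?expr0n /=; lra.
have nin : n \in gens_at loc (loc n) by rewrite inE.
have [m [mn lm]] : exists m, m != n /\ loc m = loc n.
  have c2 : (1 < #|gens_at loc (loc n)|)%N.
    case: (hbus (loc n)) => // /eqP; rewrite cards_eq0 => /eqP e.
    by rewrite e inE in nin.
  move: c2; rewrite (cardD1 n) nin add1n ltnS => /card_gt0P [m].
  by rewrite !inE => /andP[mn /eqP lm]; exists m.
have nm : n != m by rewrite eq_sym.
have := hopt' _ _ (shift_feas hf' nm (esym lm)).
rewrite shift_sum /upd_bid eqxx (negbTE mn) => h.
have ebm : b m = b n by rewrite /b lm.
rewrite ebm in h.
have bnle : bn <= b n by nra.
have := hpay _ (ltW xp); have := ler_wpM2r (ltW xp) bnle; lra.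
Qed.
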